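(* Let $a>0$, $\alpha\in[0,1)$ and $f\in\mathcal C_a$, and let $g=\mathrm{Sh}_\alpha(f)$. Then $\|g-g^{\pm\eta}\|_{\infty,\mathbb R}\to0$ as $\eta\to0$ (for both signs).
   Context: $\mathcal C_a$ is the set of $C^1$ functions $f:\mathbb R\to\mathbb R$ that are even, satisfy $f(s)=|s|$ for $|s|\ge a$ and are strictly convex on $[-a,a]$. For any function $g$ and $\eta\in(0,1)$, $g^{\pm\eta}(s)=(1\pm\frac\eta2)g\big(s/(1\pm\frac\eta2)\big)$. For $f\in\mathcal C_a$: $F_\alpha(s)=f(s)-\alpha s$, $x_\alpha^+=(f')^{-1}(\alpha)\in[0,a)$ (inverse of $f':[-a,a]\to[-1,1]$); let $F_\alpha^{-1}$ be the inverse of $F_\alpha|_{[x_\alpha^+,\infty)}$, $\phi=F_\alpha^{-1}\circ F_\alpha$, $\delta_x=(1-\alpha)^{-1}F_\alpha(x)-\phi(x)$, $s_\alpha=x_\alpha^++\delta_{x_\alpha^+}$; $x\mapsto x+\delta_x$ is an increasing bijection $(-\infty,x_\alpha^+]\to(-\infty,s_\alpha]$ with inverse $\tau$. Define $\mathrm{Sh}_\alpha(f)(x)=\alpha x+F_\alpha(\tau(x))$ for $x\le s_\alpha$ and $=x$ for $x>s_\alpha$. *)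

(* Defs.v *)
From Stdlib Require Import Reals Lra ClassicalEpsilon.
From Coquelicot Require Import Coquelicot.
Open Scope R_scope.

Definition strictly_convex_on (f : R -> R) (lo hi : R) : Prop :=
  forall x y t, lo <= x <= hi -> lo <= y <= hi -> x <> y -> 0 < t < 1 ->
    f (t * x + (1 - t) * y) < t * f x + (1 - t) * f y.

Definition in_Ca (a : R) (f : R -> R) : Prop :=
  (forall x, ex_derive f x) /\
  (forall x, continuous (Derive f) x) /\
  (forall s, f (- s) = f s) /\
  (forall s, a <= Rabs s -> f s = Rabs s) /\
  strictly_convex_on f (- a) a.

Definition choose_R (P : R -> Prop) : R := epsilon (inhabits 0) P.

Section Shift.
Variables (a alpha : R) (f : R -> R).

Definition F_al (s : R) : R := f s - alpha * s.

Definition x_plus : R := choose_R (fun x => - a <= x <= a /\ Derive f x = alpha).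

Definition F_al_inv (y : R) : R := choose_R (fun z => x_plus <= z /\ F_al z = y).
Definition phi (x : R) : R := F_al_inv (F_al x).

Definition delta (x : R) : R := / (1 - alpha) * F_al x - phi x.

Definition s_al : R := x_plus + delta x_plus.

Definition tau (x : R) : R := choose_R (fun y => y <= x_plus /\ y + delta y = x).

End Shift.

Definition Sh (a alpha : R) (f : R -> R) (x : R) : R :=
  if Rle_dec x (s_al a alpha f) then alpha * x + F_al alpha f (tau a alpha f x)
  else x.

(* g^{+eta} (b = true) and g^{-eta} (b = false):
   g^{+-eta}(s) = (1 +- eta/2) g (s / (1 +- eta/2)). *)
Definition pm_factor (b : bool) (eta : R) : R :=
  if b then 1 + eta / 2 else 1 - eta / 2.

Definition g_pm (b : bool) (eta : R) (g : R -> R) (s : R) : R :=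
  pm_factor b eta * g (s / pm_factor b eta).

(* Main.v *)
Require Import Defs.
From Stdlib Require Import Reals Lra ClassicalEpsilon.
From Coquelicot Require Import Coquelicot.
Open Scope R_scope.
Open Scope R_scope.

Lemma cont_eps (g : R -> R) x : continuous g x ->
  forall eps, 0 < eps -> exists d, 0 < d /\ forall y, Rabs (y - x) < d -> Rabs (g y - g x) < eps.
Proof.
  intros H eps He.
  destruct (H (fun z => Rabs (z - g x) < eps)) as [d Hd].
  { exists (mkposreal eps He). intros z Hz. exact Hz. }
  exists d. split. apply cond_pos. intros y Hy. apply Hd. exact Hy.
Qed.

Lemma eps_cpt (g : R -> R) x :
  (forall eps, 0 < eps -> exists d, 0 < d /\ forall y, Rabs (y - x) < d -> Rabs (g y - g x) < eps) ->
  continuity_pt g x.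
Proof.
  intros H eps He. destruct (H eps He) as [d [Hd H2]]. exists d. split. exact Hd.
  intros y [_ Hy]. apply H2. exact Hy.
Qed.

Lemma cpt_eps (g : R -> R) x : continuity_pt g x ->
  forall eps, 0 < eps -> exists d, 0 < d /\ forall y, Rabs (y - x) < d -> Rabs (g y - g x) < eps.
Proof.
  intros H eps He. destruct (H eps He) as [d [Hd H2]]. exists d. split. exact Hd.
  intros y Hy. destruct (Req_dec y x) as [->|Hne].
  - unfold Rminus. rewrite Rplus_opp_r, Rabs_R0. exact He.
  - apply (H2 y). split. split. exact I. auto. exact Hy.
Qed.

Lemma dlim a f x : in_Ca a f -> derivable_pt_lim f x (Derive f x).
Proof. intros [H _]. apply is_derive_Reals. apply Derive_correct. apply H. Qed.

Lemma D_right a f x : 0 < a -> in_Ca a f -> a < x -> Derive f x = 1.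
Proof.
  intros Ha Hf Hx. apply (uniqueness_limite f x). apply (dlim a). exact Hf.
  intros eps He. exists (mkposreal (x - a) ltac:(lra)). intros h Hh Hh2. simpl in Hh2.
  destruct Hf as (_&_&_&Hab&_).
  rewrite (Hab (x+h)), (Hab x).
  - rewrite (Rabs_right x) by lra. rewrite (Rabs_right (x+h)).
    + replace ((x + h - x) / h - 1) with 0 by (field; auto). rewrite Rabs_R0. exact He.
    + apply Rabs_def2 in Hh2. lra.
  - rewrite Rabs_right; lra.
  - apply Rabs_def2 in Hh2. rewrite Rabs_right; lra.
Qed.

Lemma D_left a f x : 0 < a -> in_Ca a f -> x < - a -> Derive f x = -1.
Proof.
  intros Ha Hf Hx. apply (uniqueness_limite f x). apply (dlim a). exact Hf.
  intros eps He. exists (mkposreal (- a - x) ltac:(lra)). intros h Hh Hh2. simpl in Hh2.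
  destruct Hf as (_&_&_&Hab&_).
  rewrite (Hab (x+h)), (Hab x).
  - rewrite (Rabs_left x) by lra. rewrite (Rabs_left (x+h)).
    + replace ((- (x + h) - - x) / h - -1) with 0 by (field; auto). rewrite Rabs_R0. exact He.
    + apply Rabs_def2 in Hh2. lra.
  - rewrite Rabs_left; lra.
  - apply Rabs_def2 in Hh2. rewrite Rabs_left; lra.
Qed.

Lemma D_le_slope a f x y : in_Ca a f -> -a <= x -> x < y -> y <= a ->
  Derive f x <= (f y - f x) / (y - x).
Proof.
  intros Hf H1 H2 H3. set (S := (f y - f x) / (y - x)).
  destruct (Rle_or_lt (Derive f x) S) as [H|H]; [exact H|exfalso].
  destruct (dlim a f x Hf (Derive f x - S) ltac:(lra)) as [d Hd].
  set (h := Rmin (d/2) ((y-x)/2)).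
  assert (Hh0 : 0 < h). { unfold h. apply Rmin_glb_lt. destruct d; simpl; lra. lra. }
  assert (Hh1 : h <= d/2) by apply Rmin_l. assert (Hh2 : h <= (y-x)/2) by apply Rmin_r.
  assert (Hq := Hd h ltac:(lra) ltac:(rewrite Rabs_right; destruct d; simpl in *; lra)).
  apply Rabs_def2 in Hq. destruct Hq as [_ Hq].
  set (t := h / (y - x)).
  assert (Ht : 0 < t < 1). { unfold t. split. apply Rdiv_lt_0_compat; lra.
    apply (Rmult_lt_reg_r (y-x)). lra. unfold Rdiv. rewrite Rmult_assoc, Rinv_l; lra. }
  destruct Hf as (_&_&_&_&Hc).
  assert (Hc' := Hc y x t ltac:(lra) ltac:(lra) ltac:(lra) Ht).
  replace (t * y + (1 - t) * x) with (x + h) in Hc' by (unfold t; field; lra).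
  assert (E : f (x + h) - f x < h * S).
  { unfold S. replace (h * ((f y - f x) / (y - x))) with (t * (f y - f x)) by (unfold t; field; lra). nra. }
  assert (E2 : (f (x + h) - f x) / h < S).
  { apply (Rmult_lt_reg_r h). lra. unfold Rdiv. rewrite Rmult_assoc, Rinv_l; lra. }
  lra.
Qed.

Lemma D_ge_slope a f x y : in_Ca a f -> -a <= x -> x < y -> y <= a ->
  (f y - f x) / (y - x) <= Derive f y.
Proof.
  intros Hf H1 H2 H3. set (S := (f y - f x) / (y - x)).
  destruct (Rle_or_lt S (Derive f y)) as [H|H]; [exact H|exfalso].
  destruct (dlim a f y Hf (S - Derive f y) ltac:(lra)) as [d Hd].
  set (h := Rmin (d/2) ((y-x)/2)).
  assert (Hh0 : 0 < h). { unfold h. apply Rmin_glb_lt. destruct d; simpl; lra. lra. }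
  assert (Hh1 : h <= d/2) by apply Rmin_l. assert (Hh2 : h <= (y-x)/2) by apply Rmin_r.
  assert (Hq := Hd (-h) ltac:(lra) ltac:(rewrite Rabs_left; destruct d; simpl in *; lra)).
  apply Rabs_def2 in Hq. destruct Hq as [Hq _].
  set (t := h / (y - x)).
  assert (Ht : 0 < t < 1). { unfold t. split. apply Rdiv_lt_0_compat; lra.
    apply (Rmult_lt_reg_r (y-x)). lra. unfold Rdiv. rewrite Rmult_assoc, Rinv_l; lra. }
  destruct Hf as (_&_&_&_&Hc).
  assert (Hc' := Hc x y t ltac:(lra) ltac:(lra) ltac:(lra) Ht).
  replace (t * x + (1 - t) * y) with (y + - h) in Hc' by (unfold t; field; lra).
  assert (E : f (y + - h) - f y < - h * S).
  { unfold S. replace (- h * ((f y - f x) / (y - x))) with (t * (f x - f y)) by (unfold t; field; lra). nra. }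
  assert (E2 : S < (f (y + - h) - f y) / - h).
  { apply (Rmult_lt_reg_r h). lra.
    replace ((f (y + - h) - f y) / - h * h) with (- (f (y + - h) - f y)) by (field; lra). lra. }
  lra.
Qed.

Lemma D_strict a f x y : in_Ca a f -> -a <= x -> x < y -> y <= a ->
  Derive f x < Derive f y.
Proof.
  intros Hf H1 H2 H3. set (m := (x + y) / 2).
  assert (A := D_le_slope a f x m Hf ltac:(lra) ltac:(unfold m; lra) ltac:(unfold m; lra)).
  assert (B := D_ge_slope a f m y Hf ltac:(unfold m; lra) ltac:(unfold m; lra) ltac:(lra)).
  assert (C : f m < / 2 * f x + (1 - / 2) * f y).
  { destruct Hf as (_&_&_&_&Hc). unfold m.
    replace ((x + y) / 2) with (/2 * x + (1 - /2) * y) by field. apply Hc; lra. }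
  replace (m - x) with ((y - x) / 2) in A by (unfold m; field).
  replace (y - m) with ((y - x) / 2) in B by (unfold m; field).
  assert ((f m - f x) / ((y - x) / 2) < (f y - f m) / ((y - x) / 2)).
  { unfold Rdiv. apply Rmult_lt_compat_r. apply Rinv_0_lt_compat. lra. lra. }
  lra.
Qed.

Lemma D_at a f : 0 < a -> in_Ca a f -> Derive f a = 1 /\ Derive f (-a) = -1.
Proof.
  intros Ha Hf. assert (Hc := proj1 (proj2 Hf)). split.
  - destruct (Req_dec (Derive f a) 1) as [E|E]; [exact E|exfalso].
    destruct (cont_eps _ _ (Hc a) (Rabs (Derive f a - 1)) ltac:(apply Rabs_pos_lt; lra)) as [d [Hd H]].
    assert (H1 := H (a + d/2) ltac:(rewrite Rabs_right; lra)).
    rewrite (D_right a f (a + d/2) Ha Hf) in H1 by lra. rewrite Rabs_minus_sym in H1. lra.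
  - destruct (Req_dec (Derive f (-a)) (-1)) as [E|E]; [exact E|exfalso].
    destruct (cont_eps _ _ (Hc (-a)) (Rabs (Derive f (-a) - -1)) ltac:(apply Rabs_pos_lt; lra)) as [d [Hd H]].
    assert (H1 := H (-a - d/2) ltac:(rewrite Rabs_left; lra)).
    rewrite (D_left a f (-a - d/2) Ha Hf) in H1 by lra. rewrite Rabs_minus_sym in H1. lra.
Qed.

Lemma D_bound a f x : 0 < a -> in_Ca a f -> -1 <= Derive f x <= 1.
Proof.
  intros Ha Hf. destruct (D_at a f Ha Hf) as [E1 E2].
  destruct (Rlt_or_le a x). rewrite (D_right a f x Ha Hf) by lra; lra.
  destruct (Rlt_or_le x (-a)). rewrite (D_left a f x Ha Hf) by lra; lra.
  split.
  - destruct (Req_dec x (-a)) as [->|]. lra. rewrite <- E2. left. apply (D_strict a f); try exact Hf; lra.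
  - destruct (Req_dec x a) as [->|]. lra. rewrite <- E1. left. apply (D_strict a f); try exact Hf; lra.
Qed.

Lemma choose_spec (P : R -> Prop) : (exists x, P x) -> P (choose_R P).
Proof. intros H. unfold choose_R. apply epsilon_spec. exact H. Qed.

Lemma xp_spec a alpha f : 0 < a -> 0 <= alpha < 1 -> in_Ca a f ->
  - a <= x_plus a alpha f <= a /\ Derive f (x_plus a alpha f) = alpha.
Proof.
  intros Ha Hal Hf. unfold x_plus. apply choose_spec.
  destruct (D_at a f Ha Hf) as [E1 E2].
  destruct (IVT_cor (fun x => Derive f x - alpha) (-a) a) as [z [Hz1 Hz2]].
  - intro x. apply (continuity_pt_minus (Derive f) (fun _ => alpha)).
    apply continuity_pt_filterlim. apply (proj1 (proj2 Hf)).
    apply continuity_pt_const. intros u v; reflexivity.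
  - lra.
  - rewrite E1, E2. nra.
  - exists z. split. exact Hz1. lra.
Qed.

Lemma D_gt a alpha f c : 0 < a -> 0 <= alpha < 1 -> in_Ca a f ->
  x_plus a alpha f < c -> alpha < Derive f c.
Proof.
  intros Ha Hal Hf Hc. destruct (xp_spec a alpha f Ha Hal Hf) as [H1 H2].
  destruct (Rlt_or_le a c). rewrite (D_right a f c Ha Hf); lra.
  rewrite <- H2. apply (D_strict a f); try exact Hf; lra.
Qed.

Lemma D_lt a alpha f c : 0 < a -> 0 <= alpha < 1 -> in_Ca a f ->
  c < x_plus a alpha f -> Derive f c < alpha.
Proof.
  intros Ha Hal Hf Hc. destruct (xp_spec a alpha f Ha Hal Hf) as [H1 H2].
  destruct (Rlt_or_le c (-a)). rewrite (D_left a f c Ha Hf); lra.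
  rewrite <- H2. apply (D_strict a f); try exact Hf; lra.
Qed.

Lemma F_dlim a alpha f c : in_Ca a f ->
  derivable_pt_lim (F_al alpha f) c (Derive f c - alpha).
Proof.
  intros Hf. unfold F_al. replace (Derive f c - alpha) with (Derive f c - alpha * 1) by ring.
  apply (derivable_pt_lim_minus f (fun s => alpha * s)). apply (dlim a). exact Hf.
  apply (derivable_pt_lim_scal (fun s => s)). apply derivable_pt_lim_id.
Qed.

Lemma F_up a alpha f u v : 0 < a -> 0 <= alpha < 1 -> in_Ca a f ->
  x_plus a alpha f <= u -> u < v -> F_al alpha f u < F_al alpha f v.
Proof.
  intros Ha Hal Hf H1 H2.
  destruct (MVT_cor2 (F_al alpha f) (fun c => Derive f c - alpha) u v H2) as [c [Hc1 Hc2]].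
  { intros c _. apply (F_dlim a). exact Hf. }
  assert (alpha < Derive f c) by (apply (D_gt a alpha f c); auto; lra).
  nra.
Qed.

Lemma F_down a alpha f u v : 0 < a -> 0 <= alpha < 1 -> in_Ca a f ->
  v <= x_plus a alpha f -> u < v -> F_al alpha f v < F_al alpha f u.
Proof.
  intros Ha Hal Hf H1 H2.
  destruct (MVT_cor2 (F_al alpha f) (fun c => Derive f c - alpha) u v H2) as [c [Hc1 Hc2]].
  { intros c _. apply (F_dlim a). exact Hf. }
  assert (Derive f c < alpha) by (apply (D_lt a alpha f c); auto; lra).
  nra.
Qed.

Lemma f_lip a f u v : 0 < a -> in_Ca a f -> u <= v ->
  - (v - u) <= f v - f u <= v - u.
Proof.
  intros Ha Hf H. destruct (Req_dec u v) as [->|Hne]. lra.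
  destruct (MVT_cor2 f (Derive f) u v ltac:(lra)) as [c [Hc1 Hc2]].
  { intros c _. apply (dlim a). exact Hf. }
  assert (B := D_bound a f c Ha Hf). rewrite Hc1. split; nra.
Qed.

Lemma F_min a alpha f x : 0 < a -> 0 <= alpha < 1 -> in_Ca a f ->
  F_al alpha f (x_plus a alpha f) <= F_al alpha f x.
Proof.
  intros Ha Hal Hf.
  destruct (Rtotal_order x (x_plus a alpha f)) as [H|[H|H]].
  - left. apply (F_down a); auto; lra.
  - rewrite H. lra.
  - left. apply (F_up a); auto; lra.
Qed.

Lemma F_inj a alpha f z1 z2 : 0 < a -> 0 <= alpha < 1 -> in_Ca a f ->
  x_plus a alpha f <= z1 -> x_plus a alpha f <= z2 -> F_al alpha f z1 = F_al alpha f z2 -> z1 = z2.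
Proof.
  intros Ha Hal Hf H1 H2 E.
  destruct (Rtotal_order z1 z2) as [H|[H|H]]; auto.
  - assert (F_al alpha f z1 < F_al alpha f z2) by (apply (F_up a); auto). lra.
  - assert (F_al alpha f z2 < F_al alpha f z1) by (apply (F_up a); auto). lra.
Qed.

Lemma f_cont a f x : in_Ca a f -> continuity_pt f x.
Proof.
  intros Hf. apply derivable_continuous_pt. exists (Derive f x). apply (dlim a). exact Hf.
Qed.

Lemma F_cont a alpha f x : in_Ca a f -> continuity_pt (F_al alpha f) x.
Proof.
  intros Hf. apply derivable_continuous_pt. exists (Derive f x - alpha). apply (F_dlim a). exact Hf.
Qed.

Lemma f_pos a f s : 0 < a -> in_Ca a f -> a <= s -> f s = s.
Proof. intros Ha Hf H. destruct Hf as (_&_&_&Hab&_). rewrite Hab; rewrite Rabs_right; lra. Qed.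

Lemma f_neg a f s : 0 < a -> in_Ca a f -> s <= - a -> f s = - s.
Proof. intros Ha Hf H. destruct Hf as (_&_&_&Hab&_). rewrite Hab; rewrite Rabs_left; lra. Qed.

Lemma Finv_spec a alpha f y : 0 < a -> 0 <= alpha < 1 -> in_Ca a f ->
  F_al alpha f (x_plus a alpha f) <= y ->
  x_plus a alpha f <= F_al_inv a alpha f y /\ F_al alpha f (F_al_inv a alpha f y) = y.
Proof.
  intros Ha Hal Hf Hy. unfold F_al_inv. apply choose_spec.
  set (p := x_plus a alpha f).
  set (B := Rmax a (Rmax p (Rabs y / (1 - alpha)))).
  assert (HB1 : a <= B) by apply Rmax_l.
  assert (HB2 : p <= B) by (eapply Rle_trans; [apply Rmax_l|apply Rmax_r]).
  assert (HB3 : Rabs y / (1 - alpha) <= B) by (eapply Rle_trans; [apply Rmax_r|apply Rmax_r]).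
  assert (FB : F_al alpha f B = (1 - alpha) * B).
  { unfold F_al. rewrite (f_pos a f B Ha Hf HB1). ring. }
  assert (FB2 : y <= F_al alpha f B).
  { rewrite FB. assert (Rabs y <= (1 - alpha) * B).
    { replace (Rabs y) with ((1 - alpha) * (Rabs y / (1 - alpha))) by (field; lra).
      apply Rmult_le_compat_l; lra. }
    assert (y <= Rabs y) by apply RRle_abs. lra. }
  destruct (IVT_cor (fun z => F_al alpha f z - y) p B) as [z [Hz1 Hz2]].
  - intro x. apply (continuity_pt_minus (F_al alpha f) (fun _ => y)).
    apply (F_cont a). exact Hf. apply continuity_pt_const. intros u v; reflexivity.
  - exact HB2.
  - unfold p in *. nra.
  - exists z. cbv beta in Hz2. split; lra.
Qed.

Lemma phi_spec a alpha f x : 0 < a -> 0 <= alpha < 1 -> in_Ca a f ->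
  x_plus a alpha f <= phi a alpha f x /\ F_al alpha f (phi a alpha f x) = F_al alpha f x.
Proof.
  intros Ha Hal Hf. unfold phi. apply Finv_spec; auto. apply F_min; auto.
Qed.

Lemma phi_id a alpha f x : 0 < a -> 0 <= alpha < 1 -> in_Ca a f ->
  x_plus a alpha f <= x -> phi a alpha f x = x.
Proof.
  intros Ha Hal Hf H. destruct (phi_spec a alpha f x Ha Hal Hf) as [H1 H2].
  apply (F_inj a alpha f); auto.
Qed.

Lemma delta_neg a alpha f x : 0 < a -> 0 <= alpha < 1 -> in_Ca a f ->
  x <= - a -> delta a alpha f x = 0.
Proof.
  intros Ha Hal Hf H. destruct (xp_spec a alpha f Ha Hal Hf) as [Hp _].
  set (z := - (1 + alpha) * x / (1 - alpha)).
  assert (Ez : (1 - alpha) * z = - (1 + alpha) * x) by (unfold z; field; lra).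
  assert (Hz : a <= z) by nra.
  assert (Fx : F_al alpha f x = - (1 + alpha) * x).
  { unfold F_al. rewrite (f_neg a f x Ha Hf H). ring. }
  assert (Ephi : phi a alpha f x = z).
  { destruct (phi_spec a alpha f x Ha Hal Hf) as [H1 H2].
    apply (F_inj a alpha f); auto. lra.
    rewrite H2. unfold F_al at 2. rewrite (f_pos a f z Ha Hf Hz). rewrite Fx. lra. }
  unfold delta. rewrite Ephi, Fx. unfold z. field. lra.
Qed.

Lemma inv_cont (G psi : R -> R) p x0 :
  (forall x, continuity_pt G x) ->
  (forall u v, p <= u -> u < v -> G u < G v) ->
  (forall x, p <= psi x /\ G (psi x) = G x) ->
  continuity_pt psi x0.
Proof.
  intros HG Hmon Hpsi. apply eps_cpt. intros eps He.
  set (z0 := psi x0). destruct (Hpsi x0) as [Hz0 Ez0]. fold z0 in Hz0, Ez0.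
  assert (Hweak : forall u v, p <= u -> u <= v -> G u <= G v).
  { intros u v Hu Huv. destruct (Req_dec u v) as [->|]. lra. left. apply Hmon; lra. }
  assert (e1p : 0 < G (z0 + eps) - G x0) by (rewrite <- Ez0; assert (G z0 < G (z0+eps)) by (apply Hmon; lra); lra).
  destruct (Rle_or_lt p (z0 - eps)) as [Hc|Hc].
  - assert (e2p : 0 < G x0 - G (z0 - eps)) by (rewrite <- Ez0; assert (G (z0 - eps) < G z0) by (apply Hmon; lra); lra).
    destruct (cpt_eps G x0 (HG x0) (Rmin (G (z0 + eps) - G x0) (G x0 - G (z0 - eps))) ltac:(apply Rmin_glb_lt; lra)) as [d [Hd H]].
    exists d. split. exact Hd. intros y Hy. specialize (H y Hy).
    assert (m1 := Rmin_l (G (z0 + eps) - G x0) (G x0 - G (z0 - eps))).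
    assert (m2 := Rmin_r (G (z0 + eps) - G x0) (G x0 - G (z0 - eps))).
    apply Rabs_def2 in H. destruct (Hpsi y) as [Hy1 Hy2].
    apply Rabs_def1.
    + destruct (Rlt_or_le (psi y - z0) eps) as [|Hn]. exact H0. exfalso.
      assert (G (z0 + eps) <= G (psi y)) by (apply Hweak; lra). lra.
    + destruct (Rlt_or_le (- eps) (psi y - z0)) as [|Hn]. exact H0. exfalso.
      assert (G (psi y) <= G (z0 - eps)) by (apply Hweak; lra). lra.
  - destruct (cpt_eps G x0 (HG x0) (G (z0 + eps) - G x0) e1p) as [d [Hd H]].
    exists d. split. exact Hd. intros y Hy. specialize (H y Hy).
    apply Rabs_def2 in H. destruct (Hpsi y) as [Hy1 Hy2].
    apply Rabs_def1.
    + destruct (Rlt_or_le (psi y - z0) eps) as [|Hn]. exact H0. exfalso.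
      assert (G (z0 + eps) <= G (psi y)) by (apply Hweak; lra). lra.
    + lra.
Qed.

Definition hfun a alpha f x := x + delta a alpha f x.

Lemma h_cont a alpha f x : 0 < a -> 0 <= alpha < 1 -> in_Ca a f ->
  continuity_pt (hfun a alpha f) x.
Proof.
  intros Ha Hal Hf. unfold hfun, delta.
  apply (continuity_pt_plus (fun x => x) (fun x => / (1 - alpha) * F_al alpha f x - phi a alpha f x)).
  apply continuity_pt_id.
  apply (continuity_pt_minus (fun x => / (1 - alpha) * F_al alpha f x) (phi a alpha f)).
  apply (continuity_pt_mult (fun _ => / (1 - alpha)) (F_al alpha f)).
  apply continuity_pt_const. intros u v; reflexivity.
  apply (F_cont a). exact Hf.
  apply (inv_cont (F_al alpha f) (phi a alpha f) (x_plus a alpha f)).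
  - intro y. apply (F_cont a). exact Hf.
  - intros u v. apply (F_up a); auto.
  - intro y. apply phi_spec; auto.
Qed.

Lemma h_mono a alpha f x y : 0 < a -> 0 <= alpha < 1 -> in_Ca a f ->
  x < y -> y <= x_plus a alpha f -> y - x <= hfun a alpha f y - hfun a alpha f x.
Proof.
  intros Ha Hal Hf H1 H2. unfold hfun, delta.
  assert (Fd : F_al alpha f y < F_al alpha f x) by (apply (F_down a); auto).
  destruct (phi_spec a alpha f x Ha Hal Hf) as [Px1 Px2].
  destruct (phi_spec a alpha f y Ha Hal Hf) as [Py1 Py2].
  set (px := phi a alpha f x) in *. set (py := phi a alpha f y) in *.
  assert (Hpp : py < px).
  { destruct (Rlt_or_le py px) as [|Hn]; auto. exfalso.
    destruct (Req_dec px py) as [E|E]. rewrite E in Px2. lra.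
    assert (F_al alpha f px < F_al alpha f py) by (apply (F_up a); auto; lra). lra. }
  assert (L := f_lip a f py px Ha Hf ltac:(lra)).
  assert (Hd : F_al alpha f px - F_al alpha f py <= (1 - alpha) * (px - py)) by (unfold F_al; nra).
  rewrite Px2, Py2 in Hd.
  assert (Hd2 : (F_al alpha f x - F_al alpha f y) / (1 - alpha) <= px - py).
  { apply (Rmult_le_reg_l (1 - alpha)). lra.
    replace ((1 - alpha) * ((F_al alpha f x - F_al alpha f y) / (1 - alpha))) with (F_al alpha f x - F_al alpha f y) by (field; lra). lra. }
  assert (E : / (1 - alpha) * F_al alpha f y - / (1 - alpha) * F_al alpha f x = - ((F_al alpha f x - F_al alpha f y) / (1 - alpha))) by (field; lra).
  lra.
Qed.

Lemma Rabs_le_inv x b : Rabs x <= b -> - b <= x <= b.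
Proof.
  intros H. assert (A := RRle_abs x).
  assert (B : - x <= Rabs x) by (rewrite <- Rabs_Ropp; apply RRle_abs). lra.
Qed.

Lemma h_inj a alpha f y1 y2 : 0 < a -> 0 <= alpha < 1 -> in_Ca a f ->
  y1 <= x_plus a alpha f -> y2 <= x_plus a alpha f -> hfun a alpha f y1 = hfun a alpha f y2 -> y1 = y2.
Proof.
  intros Ha Hal Hf H1 H2 E. destruct (Rtotal_order y1 y2) as [H|[H|H]]; auto.
  - assert (M := h_mono a alpha f y1 y2 Ha Hal Hf H H2). lra.
  - assert (M := h_mono a alpha f y2 y1 Ha Hal Hf H H1). lra.
Qed.

Lemma sal_h a alpha f : s_al a alpha f = hfun a alpha f (x_plus a alpha f).
Proof. reflexivity. Qed.

Lemma tau_spec a alpha f x : 0 < a -> 0 <= alpha < 1 -> in_Ca a f ->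
  x <= s_al a alpha f ->
  tau a alpha f x <= x_plus a alpha f /\ hfun a alpha f (tau a alpha f x) = x.
Proof.
  intros Ha Hal Hf Hx. unfold tau. apply choose_spec.
  destruct (xp_spec a alpha f Ha Hal Hf) as [Hp _].
  destruct (Rle_or_lt x (-a)) as [Hn|Hn].
  - exists x. split. lra. rewrite (delta_neg a alpha f x Ha Hal Hf Hn). ring.
  - destruct (IVT_cor (fun y => hfun a alpha f y - x) (-a) (x_plus a alpha f)) as [z [Hz1 Hz2]].
    + intro y. apply (continuity_pt_minus (hfun a alpha f) (fun _ => x)).
      apply h_cont; auto. apply continuity_pt_const. intros u v; reflexivity.
    + lra.
    + cbv beta. rewrite sal_h in Hx. unfold hfun at 1.
      rewrite (delta_neg a alpha f (-a) Ha Hal Hf ltac:(lra)). nra.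
    + exists z. cbv beta in Hz2. unfold hfun in Hz2. split; lra.
Qed.

Lemma tau_neg a alpha f x : 0 < a -> 0 <= alpha < 1 -> in_Ca a f ->
  x <= - a -> tau a alpha f x = x.
Proof.
  intros Ha Hal Hf Hx. destruct (xp_spec a alpha f Ha Hal Hf) as [Hp _].
  assert (S : tau a alpha f x <= x_plus a alpha f /\ hfun a alpha f (tau a alpha f x) = x).
  { unfold tau. apply choose_spec. exists x. split. lra.
    rewrite (delta_neg a alpha f x Ha Hal Hf Hx). ring. }
  destruct S as [S1 S2]. apply (h_inj a alpha f); auto. lra.
  rewrite S2. unfold hfun. rewrite (delta_neg a alpha f x Ha Hal Hf Hx). ring.
Qed.

Lemma tau_sal a alpha f : 0 < a -> 0 <= alpha < 1 -> in_Ca a f ->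
  tau a alpha f (s_al a alpha f) = x_plus a alpha f.
Proof.
  intros Ha Hal Hf. destruct (tau_spec a alpha f (s_al a alpha f) Ha Hal Hf ltac:(lra)) as [S1 S2].
  apply (h_inj a alpha f _ _ Ha Hal Hf S1 (Rle_refl _)). rewrite S2. apply sal_h.
Qed.

Lemma tau_lip a alpha f u v : 0 < a -> 0 <= alpha < 1 -> in_Ca a f ->
  u <= v -> v <= s_al a alpha f ->
  0 <= tau a alpha f v - tau a alpha f u <= v - u.
Proof.
  intros Ha Hal Hf H1 H2.
  destruct (tau_spec a alpha f u Ha Hal Hf ltac:(lra)) as [U1 U2].
  destruct (tau_spec a alpha f v Ha Hal Hf ltac:(lra)) as [V1 V2].
  destruct (Rtotal_order (tau a alpha f u) (tau a alpha f v)) as [H|[H|H]].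
  - assert (M := h_mono a alpha f _ _ Ha Hal Hf H V1). lra.
  - lra.
  - assert (M := h_mono a alpha f _ _ Ha Hal Hf H U1). lra.
Qed.

Lemma F_lip a alpha f u v : 0 < a -> 0 <= alpha < 1 -> in_Ca a f -> u <= v ->
  Rabs (F_al alpha f v - F_al alpha f u) <= (1 + alpha) * (v - u).
Proof.
  intros Ha Hal Hf H. assert (L := f_lip a f u v Ha Hf H). unfold F_al.
  apply Rabs_le. split; nra.
Qed.

Lemma g_le a alpha f x : x <= s_al a alpha f ->
  Sh a alpha f x = alpha * x + F_al alpha f (tau a alpha f x).
Proof. intros H. unfold Sh. destruct (Rle_dec x (s_al a alpha f)); [reflexivity|contradiction]. Qed.

Lemma g_gt a alpha f x : s_al a alpha f < x -> Sh a alpha f x = x.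
Proof. intros H. unfold Sh. destruct (Rle_dec x (s_al a alpha f)); [lra|reflexivity]. Qed.

Lemma g_sal a alpha f : 0 < a -> 0 <= alpha < 1 -> in_Ca a f ->
  Sh a alpha f (s_al a alpha f) = s_al a alpha f.
Proof.
  intros Ha Hal Hf. rewrite g_le by lra. rewrite tau_sal by auto.
  assert (E : s_al a alpha f = / (1 - alpha) * F_al alpha f (x_plus a alpha f)).
  { unfold s_al, delta. rewrite phi_id; auto; lra. }
  rewrite E. field. lra.
Qed.

Lemma g_lip_le a alpha f u v : 0 < a -> 0 <= alpha < 1 -> in_Ca a f ->
  u <= v -> v <= s_al a alpha f -> Rabs (Sh a alpha f v - Sh a alpha f u) <= 3 * (v - u).
Proof.
  intros Ha Hal Hf H1 H2. rewrite !g_le by lra.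
  assert (T := tau_lip a alpha f u v Ha Hal Hf H1 H2).
  assert (L := F_lip a alpha f (tau a alpha f u) (tau a alpha f v) Ha Hal Hf ltac:(lra)).
  apply Rabs_le_inv in L. apply Rabs_le. split; nra.
Qed.

Lemma g_lip_ord a alpha f u v : 0 < a -> 0 <= alpha < 1 -> in_Ca a f ->
  u <= v -> Rabs (Sh a alpha f v - Sh a alpha f u) <= 3 * (v - u).
Proof.
  intros Ha Hal Hf H. set (s := s_al a alpha f).
  destruct (Rle_or_lt v s) as [Hv|Hv].
  - apply g_lip_le; auto.
  - destruct (Rle_or_lt u s) as [Hu|Hu].
    + rewrite (g_gt a alpha f v Hv).
      assert (L := g_lip_le a alpha f u s Ha Hal Hf Hu ltac:(unfold s; lra)).
      change (Rabs (Sh a alpha f s - Sh a alpha f u) <= 3 * (s - u)) in L. assert (Gs : Sh a alpha f s = s) by (apply g_sal; auto). rewrite Gs in L.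
      apply Rabs_le_inv in L. apply Rabs_le. split; lra.
    + rewrite (g_gt a alpha f v Hv), (g_gt a alpha f u Hu). rewrite Rabs_right; lra.
Qed.

Lemma g_lip a alpha f u v : 0 < a -> 0 <= alpha < 1 -> in_Ca a f ->
  Rabs (Sh a alpha f v - Sh a alpha f u) <= 3 * Rabs (v - u).
Proof.
  intros Ha Hal Hf. destruct (Rle_or_lt u v) as [H|H].
  - rewrite (Rabs_right (v - u)) by lra. apply g_lip_ord; auto.
  - rewrite Rabs_minus_sym, (Rabs_minus_sym v u). rewrite (Rabs_right (u - v)) by lra.
    apply g_lip_ord; auto; lra.
Qed.

Lemma g_out a alpha f x : 0 < a -> 0 <= alpha < 1 -> in_Ca a f ->
  Rmax a (Rabs (s_al a alpha f)) + 1 <= Rabs x -> Sh a alpha f x = Rabs x.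
Proof.
  intros Ha Hal Hf H.
  assert (M1 := Rmax_l a (Rabs (s_al a alpha f))). assert (M2 := Rmax_r a (Rabs (s_al a alpha f))).
  assert (A := RRle_abs (s_al a alpha f)). assert (B := Rabs_pos x).
  destruct (Rle_or_lt 0 x) as [Hx|Hx].
  - rewrite (Rabs_right x) in * by lra. apply g_gt. lra.
  - rewrite (Rabs_left x) in * by lra.
    assert (A2 : - s_al a alpha f <= Rabs (s_al a alpha f)) by (rewrite <- Rabs_Ropp; apply RRle_abs).
    rewrite g_le by lra. rewrite tau_neg by (auto; lra). unfold F_al.
    rewrite (f_neg a f x Ha Hf) by lra. ring.
Qed.

Lemma final_abs (g : R -> R) M : 0 < M ->
  (forall u v, Rabs (g v - g u) <= 3 * Rabs (v - u)) ->
  (forall x, M <= Rabs x -> g x = Rabs x) ->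
  forall b : bool, forall eps : R, 0 < eps ->
    exists eta0 : R, 0 < eta0 /\
      forall eta : R, 0 < eta < 1 -> eta < eta0 ->
        forall s : R, Rabs (g s - g_pm b eta g s) <= eps.
Proof.
  intros HM Hl Ho b eps He.
  set (K := 12 * M + Rabs (g 0) + 1).
  assert (HK : 0 < K) by (unfold K; assert (Rabs (g 0) >= 0) by apply Rle_ge, Rabs_pos; lra).
  exists (eps / K). split. apply Rdiv_lt_0_compat; lra.
  intros eta Heta Heta0 s. unfold g_pm.
  set (c := pm_factor b eta).
  assert (Hc : 1/2 < c /\ - (eta/2) <= c - 1 <= eta/2) by (unfold c, pm_factor; destruct b; lra).
  set (t := s / c).
  assert (Est : s = c * t) by (unfold t; field; lra).
  assert (Eabs : Rabs s = c * Rabs t) by (rewrite Est, Rabs_mult, (Rabs_right c) by lra; reflexivity).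
  assert (Ht0 := Rabs_pos t). assert (Hs0 := Rabs_pos s).
  destruct (Rle_or_lt (2 * M) (Rabs s)) as [Hs|Hs].
  - rewrite (Ho s) by lra. rewrite (Ho t) by nra. rewrite Eabs.
    replace (c * Rabs t - c * Rabs t) with 0 by ring. rewrite Rabs_R0. lra.
  - assert (Htb : Rabs t <= 4 * M) by nra.
    assert (Hst : Rabs (s - t) <= eta / 2 * Rabs t).
    { replace (s - t) with ((c - 1) * t) by (rewrite Est; ring). rewrite Rabs_mult.
      apply Rmult_le_compat_r. apply Rabs_pos. apply Rabs_le; lra. }
    assert (Hg1 := Hl t s).
    assert (Hg2 := Hl 0 t). replace (t - 0) with t in Hg2 by ring.
    assert (Hgt : Rabs (g t) <= Rabs (g 0) + 3 * Rabs t).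
    { assert (Rabs (g t) <= Rabs (g t - g 0) + Rabs (g 0)).
      { replace (g t) with ((g t - g 0) + g 0) at 1 by ring. apply Rabs_triang. }
      lra. }
    assert (E : g s - c * g t = (g s - g t) + (1 - c) * g t) by ring.
    rewrite E. eapply Rle_trans. apply Rabs_triang. rewrite Rabs_mult.
    assert (H1c : Rabs (1 - c) <= eta / 2) by (apply Rabs_le; lra).
    assert (Hp := Rabs_pos (g t)). assert (Hp1 := Rabs_pos (1 - c)).
    assert (B1 : Rabs (1 - c) * Rabs (g t) <= eta / 2 * (Rabs (g 0) + 12 * M)) by nra.
    assert (B2 : Rabs (g s - g t) <= 6 * M * eta) by nra.
    assert (B3 : eta * K < eps).
    { apply (Rmult_lt_reg_r (/ K)). apply Rinv_0_lt_compat; lra.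
      replace (eta * K * / K) with eta by (field; lra). exact Heta0. }
    unfold K in B3. assert (Rabs (g 0) >= 0) by apply Rle_ge, Rabs_pos. nra.
Qed.

Theorem proposition3p26 (a alpha : R) (f : R -> R) :
  0 < a -> 0 <= alpha < 1 -> in_Ca a f ->
  forall b : bool, forall eps : R, 0 < eps ->
    exists eta0 : R, 0 < eta0 /\
      forall eta : R, 0 < eta < 1 -> eta < eta0 ->
        forall s : R,
          Rabs (Sh a alpha f s - g_pm b eta (Sh a alpha f) s) <= eps.
Proof.
  intros Ha Hal Hf. apply (final_abs _ (Rmax a (Rabs (s_al a alpha f)) + 1)).
  - assert (M1 := Rmax_l a (Rabs (s_al a alpha f))). lra.
  - intros u v. apply g_lip; auto.
  - intros x Hx. apply g_out; auto.
Qed.
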